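(* Let $f:(\mathbb R^2,q)\to(\mathbb R^3,p)$ be a smooth map germ with a corank 1 singularity at $q$, with curvature parabola $\Delta_p$, axial vector $v_a$, adapted frame $\{v_a,\nu_2\}$ and axial normal curvature function $K_{v_a}(y)=\langle\eta(y),v_a\rangle$, and suppose $\kappa_a(p)$ is defined. Then $\kappa_a(p)=0$ if and only if either $\Delta_p$ is a point, or $\eta(y_0)$ is parallel to $\nu_2$, where $y_0$ is a critical point of $K_{v_a}$.
   Context: Let $f:(\mathbb R^2,q)\to(\mathbb R^3,p)$ be a smooth germ with $\operatorname{rank} df_q=1$; $M$ is its image. $T_pM=\operatorname{im} df_q$ and $N_pM$ is its orthogonal complement (normal plane), with a fixed orientation. The first fundamental form is $I(X,Y)=\langle df_q X,df_qY\rangle$ on $T_q\mathbb R^2$. The second fundamental form $II:T_q\mathbb R^2\times T_q\mathbb R^2\to N_pM$ is the symmetric bilinear map with $II(\partial_u,\partial_u)=f_{uu}(q)^\perp$, $II(\partial_u,\partial_v)=f_{uv}(q)^\perp$, $II(\partial_v,\partial_v)=f_{vv}(q)^\perp$ ($\perp$ = orthogonal projection onto $N_pM$). With $C_q=\{X: I(X,X)=1\}$, the curvature parabola is $\Delta_p=\{II(X,X):X\in C_q\}$. Choosing coordinates with $f_v(q)=0$, $|f_u(q)|=1$, $C_q=\{\pm(\partial_u+y\partial_v)\}$ and $\Delta_p$ is parametrized by $\eta(y)=II(\partial_u+y\partial_v,\partial_u+y\partial_v)$, $y\in\mathbb R$; $\Delta_p$ is a non-degenerate parabola, a half-line, a line,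 or a point. If $\Delta_p$ is a line or half-line, set $\eta(y_\infty)=\eta'(y)/|\eta'(y)|$ for any $y>0$ with $\eta'(y)\neq0$. Axial vector $v_a\in N_pM$: if $\Delta_p$ is a non-degenerate parabola, let $v_d$ be the unit vector in the direction of its directrix and $v_a$ the unit vector with $\{v_a,v_d\}$ a positively oriented orthonormal frame (so $v_a$ points along the axis of symmetry towards the interior of the parabola); if $\Delta_p$ is a line or half-line, $v_a=\eta(y_\infty)$; if $\Delta_p$ is a point other than the origin, $v_a$ is such that $\{v_a,\eta/|\eta|\}$ is a positively oriented orthonormal frame; if $\Delta_p$ is the origin, $v_a$ is any unit vector. The adapted frame is $\{v_a,\nu_2\}$, the positively oriented orthonormal frame of $N_pM$ containing $v_a$. The axial curvature is $\kappa_a(p)=\min\{\langle\eta(y),v_a\rangle: y\in\mathbb R\}$, when this minimum exists (it does not when $\Delta_p$ is a line). *)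

(* Defs.v *)
From HB Require Import structures.
From mathcomp Require Import all_boot all_order all_algebra.
From mathcomp Require Import all_classical all_reals all_analysis.
Set Implicit Arguments. Unset Strict Implicit. Unset Printing Implicit Defensive.
Import Order.TTheory GRing.Theory Num.Theory.
Import numFieldNormedType.Exports.
Local Open Scope classical_set_scope.
Local Open Scope ring_scope.

Section CurvatureParabola.
Variable R : realType.
Notation V2 := 'rV[R]_2.
Notation V3 := 'rV[R]_3.

Definition dot (u v : V3) : R := (u *m v^T) 0 0.
Definition enorm (u : V3) : R := Num.sqrt (dot u u).
Definition det3 (t x y : V3) : R :=
    t 0 0 * (x 0 1 * y 0 2 - x 0 2 * y 0 1)
  - t 0 1 * (x 0 0 * y 0 2 - x 0 2 * y 0 0)
  + t 0 2 * (x 0 0 * y 0 1 - x 0 1 * y 0 0).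

Definition e_u : V2 := delta_mx 0 0.
Definition e_v : V2 := delta_mx 0 1.

Fixpoint Dn (l : seq V2) (f : V2 -> V3) : V2 -> V3 :=
  match l with [::] => f | v :: l' => 'D_v (Dn l' f) end.
Definition smooth_germ (f : V2 -> V3) (q : V2) : Prop :=
  forall l : seq V2, \forall x \near q, differentiable (Dn l f) x.

Definition f_u (f : V2 -> V3) (q : V2) := 'D_e_u f q.
Definition f_v (f : V2 -> V3) (q : V2) := 'D_e_v f q.
Definition f_uu (f : V2 -> V3) (q : V2) := 'D_e_u ('D_e_u f) q.
Definition f_uv (f : V2 -> V3) (q : V2) := 'D_e_v ('D_e_u f) q.
Definition f_vv (f : V2 -> V3) (q : V2) := 'D_e_v ('D_e_v f) q.

Definition dfq (f : V2 -> V3) (q : V2) (X : V2) : V3 := X 0 0 *: f_u f q + X 0 1 *: f_v f q.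

Definition Ifirst (f : V2 -> V3) (q : V2) (X Y : V2) : R := dot (dfq f q X) (dfq f q Y).

Definition inN (f : V2 -> V3) (q : V2) (x : V3) : Prop := forall X : V2, dot x (dfq f q X) = 0.

(** orthogonal projection onto N_pM, in the normalized coordinates
    (f_v(q) = 0, |f_u(q)| = 1) where im df_q = span f_u(q). *)
Definition perp (f : V2 -> V3) (q : V2) (x : V3) : V3 := x - dot x (f_u f q) *: f_u f q.

Definition II (f : V2 -> V3) (q : V2) (X Y : V2) : V3 :=
  X 0 0 * Y 0 0 *: perp f q (f_uu f q)
  + (X 0 0 * Y 0 1 + X 0 1 * Y 0 0) *: perp f q (f_uv f q)
  + X 0 1 * Y 0 1 *: perp f q (f_vv f q).

Definition Delta (f : V2 -> V3) (q : V2) : set V3 :=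
  [set II f q X X | X in [set X | Ifirst f q X X = 1]].

Definition eta_curv (f : V2 -> V3) (q : V2) (y : R) : V3 := II f q (e_u + y *: e_v) (e_u + y *: e_v).

Definition is_point (S : set V3) : Prop := exists P, S = [set P].
Definition is_line (S : set V3) : Prop :=
  exists P d : V3, d != 0 /\ S = [set P + t *: d | t in [set: R]].
Definition is_halfline (S : set V3) : Prop :=
  exists P d : V3, d != 0 /\ S = [set P + t *: d | t in [set t : R | 0 <= t]].
Definition lin_indep (d1 d2 : V3) : Prop :=
  forall a b : R, a *: d1 + b *: d2 = 0 -> a = 0 /\ b = 0.
Definition is_nd_parabola (S : set V3) : Prop :=
  exists P d1 d2 : V3, lin_indep d1 d2 /\
    S = [set P + t *: d1 + t ^+ 2 *: d2 | t in [set: R]].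

(** positively oriented orthonormal frame {x, y} of N_pM; the orientation of
    N_pM is fixed by the boolean o (sign of det(f_u(q), x, y)). *)
Definition pos_frame (f : V2 -> V3) (q : V2) (o : bool) (x y : V3) : Prop :=
  [/\ inN f q x /\ inN f q y, dot x x = 1, dot y y = 1, dot x y = 0 &
      (if o then 0 < det3 (f_u f q) x y else det3 (f_u f q) x y < 0)].

Definition is_axial_vector (f : V2 -> V3) (q : V2) (o : bool) (va : V3) : Prop :=
  [/\ inN f q va, dot va va = 1 &
  [\/ (* non-degenerate parabola: unit vector along the axis, towards the interior
         (the direction d2 in which the parabola opens) *)
      exists P d1 d2 : V3, lin_indep d1 d2 /\
        Delta f q = [set P + t *: d1 + t ^+ 2 *: d2 | t in [set: R]] /\
        va = (enorm d2)^-1 *: d2,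
      (* line or half-line: v_a = eta(y_oo) = eta'(y)/|eta'(y)|, y > 0, eta'(y) <> 0 *)
      (is_line (Delta f q) \/ is_halfline (Delta f q)) /\
        exists y : R, 0 < y /\ derive1 (eta_curv f q) y != 0 /\
          va = (enorm (derive1 (eta_curv f q) y))^-1 *: derive1 (eta_curv f q) y,
      exists P : V3, P != 0 /\ Delta f q = [set P] /\
        pos_frame f q o va ((enorm P)^-1 *: P) |
      Delta f q = [set 0] ]].

Definition K_axial (f : V2 -> V3) (q : V2) (va : V3) (y : R) : R := dot (eta_curv f q y) va.

Definition axial_curvature_is (f : V2 -> V3) (q : V2) (va : V3) (k : R) : Prop :=
  (exists y, K_axial f q va y = k) /\ (forall y, k <= K_axial f q va y).

End CurvatureParabola.

(* Main.v *)
Require Import Defs.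
From HB Require Import structures.
From mathcomp Require Import all_boot all_order all_algebra.
From mathcomp Require Import all_classical all_reals all_analysis.
From mathcomp Require Import ring lra.
Import Order.TTheory GRing.Theory Num.Theory.
Import numFieldNormedType.Exports.
Local Open Scope classical_set_scope.
Local Open Scope ring_scope.

Section Helpers.
Variable R : realType.
Implicit Types u v w t x y : 'rV[R]_3.

Lemma dotE u v : dot u v = u 0 0 * v 0 0 + u 0 1 * v 0 1 + u 0 2 * v 0 2.
Proof.
rewrite /dot mxE !big_ord_recr big_ord0 /= !mxE add0r.
by congr (_ + _ + _); congr (_ * _); f_equal; apply/val_inj.
Qed.

Lemma dotC u v : dot u v = dot v u.
Proof. rewrite !dotE; ring. Qed.

Lemma dotDl u v w : dot (u + v) w = dot u w + dot v w.
Proof. rewrite !dotE !mxE; ring. Qed.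

Lemma dotBl u v w : dot (u - v) w = dot u w - dot v w.
Proof. rewrite !dotE !mxE; ring. Qed.

Lemma dotZl (s : R) u w : dot (s *: u) w = s * dot u w.
Proof. rewrite !dotE !mxE; ring. Qed.

Lemma det3_ortho t x y w : dot w t = 0 -> dot w x = 0 -> dot w y = 0 ->
  det3 t x y != 0 -> w = 0.
Proof.
move=> h1 h2 h3 hd.
rewrite !dotE in h1 h2 h3.
have key : forall i : 'I_3, det3 t x y * w 0 i = 0.
  move=> i; case: i => [[|[|[|i]]] Hi] //.
  - have -> : det3 t x y * w 0 (Ordinal Hi) =
      (w 0 0 * t 0 0 + w 0 1 * t 0 1 + w 0 2 * t 0 2) * (x 0 1 * y 0 2 - x 0 2 * y 0 1)
    + (w 0 0 * x 0 0 + w 0 1 * x 0 1 + w 0 2 * x 0 2) * (y 0 1 * t 0 2 - y 0 2 * t 0 1)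
    + (w 0 0 * y 0 0 + w 0 1 * y 0 1 + w 0 2 * y 0 2) * (t 0 1 * x 0 2 - t 0 2 * x 0 1).
      have -> : Ordinal Hi = 0 :> 'I_3 by apply/val_inj.
      rewrite /det3; ring.
    by rewrite h1 h2 h3; ring.
  - have -> : det3 t x y * w 0 (Ordinal Hi) =
      (w 0 0 * t 0 0 + w 0 1 * t 0 1 + w 0 2 * t 0 2) * (x 0 2 * y 0 0 - x 0 0 * y 0 2)
    + (w 0 0 * x 0 0 + w 0 1 * x 0 1 + w 0 2 * x 0 2) * (y 0 2 * t 0 0 - y 0 0 * t 0 2)
    + (w 0 0 * y 0 0 + w 0 1 * y 0 1 + w 0 2 * y 0 2) * (t 0 2 * x 0 0 - t 0 0 * x 0 2).
      have -> : Ordinal Hi = 1 :> 'I_3 by apply/val_inj.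
      rewrite /det3; ring.
    by rewrite h1 h2 h3; ring.
  - have -> : det3 t x y * w 0 (Ordinal Hi) =
      (w 0 0 * t 0 0 + w 0 1 * t 0 1 + w 0 2 * t 0 2) * (x 0 0 * y 0 1 - x 0 1 * y 0 0)
    + (w 0 0 * x 0 0 + w 0 1 * x 0 1 + w 0 2 * x 0 2) * (y 0 0 * t 0 1 - y 0 1 * t 0 0)
    + (w 0 0 * y 0 0 + w 0 1 * y 0 1 + w 0 2 * y 0 2) * (t 0 0 * x 0 1 - t 0 1 * x 0 0).
      have -> : Ordinal Hi = 2 :> 'I_3 by apply/val_inj.
      rewrite /det3; ring.
    by rewrite h1 h2 h3; ring.
apply/rowP => i; rewrite mxE.
by have /eqP := key i; rewrite mulf_eq0 (negbTE hd) /= => /eqP.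
Qed.

End Helpers.

Lemma dot0l (R : realType) (w : 'rV[R]_3) : dot 0 w = 0.
Proof. by rewrite dotE !mxE; ring. Qed.

Lemma eu_vals (R : realType) (y : R) :
  (e_u R + y *: e_v R) 0 0 = 1 /\ (e_u R + y *: e_v R) 0 1 = y.
Proof. by rewrite /e_u /e_v !mxE /=; split; ring. Qed.

Lemma eta_E (R : realType) (f : 'rV[R]_2 -> 'rV[R]_3) q y :
  eta_curv f q y = perp f q (f_uu f q) + (y *+ 2) *: perp f q (f_uv f q)
                   + (y ^+ 2) *: perp f q (f_vv f q).
Proof.
rewrite /eta_curv /II; have [-> ->] := eu_vals R y.
by rewrite mul1r expr2 mul1r mulr1 mulr2n scale1r.
Qed.

Lemma perp_N (R : realType) (f : 'rV[R]_2 -> 'rV[R]_3) q x :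
  dot (f_u f q) (f_u f q) = 1 -> dot (perp f q x) (f_u f q) = 0.
Proof. move=> h; rewrite /perp dotBl dotZl h. by rewrite mulr1 subrr. Qed.

Lemma eta_N (R : realType) (f : 'rV[R]_2 -> 'rV[R]_3) q y :
  dot (f_u f q) (f_u f q) = 1 -> dot (eta_curv f q y) (f_u f q) = 0.
Proof.
move=> h; rewrite eta_E.
have hA := perp_N _ _ _ (f_uu f q) h.
have hB := perp_N _ _ _ (f_uv f q) h.
have hC := perp_N _ _ _ (f_vv f q) h.
move: hA hB hC.
generalize (perp f q (f_uu f q)) (perp f q (f_uv f q)) (perp f q (f_vv f q)) (f_u f q).
move=> A B C U hA hB hC.
by rewrite dotDl dotDl dotZl dotZl hA hB hC !mulr0 !addr0.
Qed.

Lemma min_crit (R : realType) (a b c y1 : R) :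
  (forall y, a + y1 * b + y1 ^+ 2 * c <= a + y * b + y ^+ 2 * c) ->
  b + y1 *+ 2 * c = 0.
Proof.
move=> h.
set D := b + y1 *+ 2 * c.
have ht : forall t, 0 <= t * D + t ^+ 2 * c.
  move=> t; have := h (y1 + t).
  have -> : a + (y1 + t) * b + (y1 + t) ^+ 2 * c =
            (a + y1 * b + y1 ^+ 2 * c) + (t * D + t ^+ 2 * c) by rewrite /D; ring.
  by rewrite lerDl.
set m := `|c| + 1.
have hm0 : 0 < m by rewrite /m; have := normr_ge0 c; lra.
have hcm : c - m <= -1 by rewrite /m; have := ler_norm c; lra.
set s := m^-1.
have hs : s * m = 1 by rewrite /s mulVf // gt_eqF.
have h1 := ht (- (D * s)).
have h2 : 0 <= D ^+ 2 * (c - m).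
  have -> : D ^+ 2 * (c - m) = m ^+ 2 * (- (D * s) * D + (- (D * s)) ^+ 2 * c).
    have -> : m ^+ 2 * (- (D * s) * D + (- (D * s)) ^+ 2 * c)
      = D ^+ 2 * (c * (s * m) ^+ 2 - m * (s * m)) by ring.
    by rewrite hs; ring.
  by apply: mulr_ge0 => //; apply: sqr_ge0.
have hD2 : 0 <= D ^+ 2 := sqr_ge0 D.
have : D ^+ 2 = 0 by nra.
by move/eqP; rewrite expf_eq0 /= => /eqP.
Qed.

Lemma crit_min (R : realType) (a b c y0 y1 k : R) :
  b + y0 *+ 2 * c = 0 -> a + y0 * b + y0 ^+ 2 * c = 0 ->
  k = a + y1 * b + y1 ^+ 2 * c ->
  (forall y, k <= a + y * b + y ^+ 2 * c) -> k = 0.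
Proof.
move=> hD hK0 hk hmin.
have E : forall y, a + y * b + y ^+ 2 * c = (y - y0) ^+ 2 * c.
  move=> y.
  have -> : a + y * b + y ^+ 2 * c = (a + y0 * b + y0 ^+ 2 * c) + (y - y0) * (b + y0 *+ 2 * c) + (y - y0) ^+ 2 * c by ring.
  by rewrite hD hK0; ring.
have hk0 : k <= 0 by have := hmin y0; rewrite E subrr expr0n /= mul0r.
rewrite E in hk.
have [hc|hc] := leP 0 c.
  apply/eqP; rewrite eq_le hk0 /= hk; apply: mulr_ge0 => //; exact: sqr_ge0.
set d := y1 - y0.
have := hmin (y0 + (`|d| + 1)); rewrite E.
have -> : y0 + (`|d| + 1) - y0 = `|d| + 1 by ring.
have hd2 : d ^+ 2 < (`|d| + 1) ^+ 2.
  have hn := normr_ge0 d.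
  have -> : d ^+ 2 = `|d| ^+ 2 by rewrite real_normK // num_real.
  nra.
rewrite hk -/d => hle.
exfalso; nra.
Qed.

Lemma dotZr (R : realType) (s : R) (u w : 'rV[R]_3) : dot u (s *: w) = s * dot u w.
Proof. rewrite !dotE !mxE; ring. Qed.

Lemma sum_diff (R : realType) (P d1 d2 : 'rV[R]_3) :
  1 *: d1 + 1 *: d2 = (P + 1 *: d1 + 1 ^+ 2 *: d2) - (P + 0 *: d1 + 0 ^+ 2 *: d2).
Proof. apply/rowP => i; rewrite !mxE; ring. Qed.

Lemma KE_gen (R : realType) (A B C v : 'rV[R]_3) (y : R) :
  dot (A + (y *+ 2) *: B + y ^+ 2 *: C) v =
  dot A v + y * (dot B v *+ 2) + y ^+ 2 * dot C v.
Proof. rewrite !dotE !mxE; ring. Qed.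

Theorem mainTheorem1 (R : realType) (f : 'rV[R]_2 -> 'rV[R]_3) (q : 'rV[R]_2)
    (o : bool) (va nu2 : 'rV[R]_3) (k : R) :
  smooth_germ f q ->
  f_v f q = 0 -> dot (f_u f q) (f_u f q) = 1 ->
  is_axial_vector f q o va ->
  pos_frame f q o va nu2 ->
  axial_curvature_is f q va k ->
  (k = 0 <->
     (is_point (Delta f q) \/
      exists y0 : R, is_derive y0 1 (K_axial f q va) 0 /\
        exists l : R, eta_curv f q y0 = l *: nu2)).
Proof.
move=> _ hfv hfu hax [[hNva hNnu] hvv hnn hvn hdet] [[y1 hy1] hmin].
have hvaU : dot va (f_u f q) = 0.
  by have := hNva (e_u R); rewrite /dfq /e_u !mxE /= scale1r scale0r addr0.
have hnuU : dot nu2 (f_u f q) = 0.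
  by have := hNnu (e_u R); rewrite /dfq /e_u !mxE /= scale1r scale0r addr0.
have hdet0 : det3 (f_u f q) va nu2 != 0.
  by move: hdet; case: (o) => h; [rewrite gt_eqF | rewrite lt_eqF].
have decomp : forall x, dot x (f_u f q) = 0 -> dot x va = 0 -> x = dot x nu2 *: nu2.
  move=> x h1 h2; apply/eqP; rewrite -subr_eq0; apply/eqP.
  apply: (det3_ortho _ _ _ _ _ _ _ _ hdet0).
  - by rewrite dotBl dotZl h1 hnuU mulr0 subrr.
  - by rewrite dotBl dotZl h2 (dotC _ nu2 va) hvn mulr0 subrr.
  - by rewrite dotBl dotZl hnn mulr1 subrr.
have KE : forall y, K_axial f q va y =
    dot (perp f q (f_uu f q)) va + y * (dot (perp f q (f_uv f q)) va *+ 2)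
    + y ^+ 2 * dot (perp f q (f_vv f q)) va.
  by move=> y; rewrite /K_axial eta_E; apply: KE_gen.
have [a [b [c {}KE]]] : exists a b c : R,
    forall y, K_axial f q va y = a + y * b + y ^+ 2 * c.
  by do 3 eexists; exact: KE.
have Kfun : K_axial f q va = (fun y => a + y * b + y ^+ 2 * c).
  by apply: funext => y; rewrite KE.
have Kder : forall y : R, is_derive y 1 (K_axial f q va) (b + y *+ 2 * c).
  move=> y; rewrite Kfun; apply: is_derive_eq.
  rewrite !scaler0 !add0r !mul1r /GRing.scale /= !mulr1; ring.
split.
- move=> k0; right; exists y1.
  have hD : b + y1 *+ 2 * c = 0.
    apply: (@min_crit R a b c y1) => y; rewrite -!KE hy1; exact: hmin.
  split; first by have := Kder y1; rewrite hD.
  exists (dot (eta_curv f q y1) nu2); apply: decomp; first exact: eta_N.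
  by move: hy1; rewrite /K_axial k0.
- case=> [[P hP] | [y0 [hd [l hl]]]]; last first.
    have hD : b + y0 *+ 2 * c = 0.
      have e1 := @derive_val _ _ _ _ _ _ _ hd.
      by rewrite (@derive_val _ _ _ _ _ _ _ (Kder y0)) in e1.
    have hK0 : a + y0 * b + y0 ^+ 2 * c = 0.
      by rewrite -KE /K_axial hl dotZl (dotC _ nu2 va) hvn mulr0.
    apply: (@crit_min R a b c y0 y1 k hD hK0); first by rewrite -KE hy1.
    by move=> y; rewrite -KE; exact: hmin.
  have inD : forall y, Delta f q (eta_curv f q y).
    move=> y; exists (e_u R + y *: e_v R) => //=.
    rewrite /Ifirst /dfq; have [-> ->] := eu_vals R y.
    by rewrite hfv scaler0 addr0 scale1r.
  have etaP : forall y, eta_curv f q y = P.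
    by move=> y; have := inD y; rewrite hP.
  have -> : k = dot P va by rewrite -hy1 /K_axial etaP.
  case: hax => _ _ [hpar | [_ [y [_ [hder _]]]] | [P0 [hP0 [hD0 hfr]]] | hD0].
  + move: hpar => [P' [d1 [d2 [hli [hD _]]]]].
    have mem : forall t, P' + t *: d1 + t ^+ 2 *: d2 = P.
      move=> t; have : Delta f q (P' + t *: d1 + t ^+ 2 *: d2).
        by rewrite hD; exists t.
      by rewrite hP.
    have := hli 1 1; rewrite (sum_diff _ P') !mem subrr.
    by case=> // /eqP; rewrite oner_eq0.
  + have hc : eta_curv f q = cst P by apply: funext => z; rewrite etaP.
    by move: hder; rewrite hc derive1_cst eqxx.
  + have eP : P = P0 by have := inD 0; rewrite hD0 etaP.
    move: hfr => [[_ _] _ hss hvs _].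
    rewrite eP (dotC _ P0 va); rewrite dotZr in hvs.
    move: hvs => /eqP; rewrite mulf_eq0 => /orP [/eqP hs0 | /eqP //].
    by move: hss; rewrite hs0 scale0r dot0l => /eqP; rewrite eq_sym oner_eq0.
  + have eP : P = 0 by have := inD 0; rewrite hD0 etaP.
    by rewrite eP dot0l.
Qed.
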